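(* Let $\lambda\in(0,1)$, $X=[0,1]^2$, $X_1=\{(x,y)\in X:y<x^2\}$, $X_2=\{(x,y)\in X:y>x^2\}$, $f_1(x,y)=\lambda(x,y)$ and $f_2(x,y)=\lambda(x,y)+(0,1-\lambda)$. Let $f:X\to X$ be any map with $f|_{X_i}=f_i$ for $i=1,2$. Then $L=\Omega=\{(0,0),(0,1)\}$ and $\Lambda=\overline{\{(0,1-\lambda^n):n\in\mathbb N\}}$.
   Context: Here $\Delta:=X\setminus(X_1\cup X_2)$ and $\tilde X:=\bigcap_{n\ge0}f^{-n}(X\setminus\Delta)$. For $x\in\tilde X$, $\omega(x)$ is the set of limits of $f^{n_k}(x)$ along divergent sequences $(n_k)$; $L:=\overline{\bigcup_{x\in\tilde X}\omega(x)}$. A point $x\in X$ is non-wandering if for every $\epsilon>0$ there is a divergent sequence $(n_k)$ with $f^{n_k}(B(x,\epsilon)\cap\tilde X)\cap B(x,\epsilon)\ne\emptyset$ for all $k$; $\Omega$ is the set of non-wandering points. With $F_i(A):=\overline{f(A\cap X_i)}$, atoms of generation $n$ are the sets $F_{i_n}\circ\cdots\circ F_{i_1}(X)$, $\Lambda_n$ is their union, and $\Lambda:=\bigcap_{n\ge1}\Lambda_n$. *)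

(* Defs.v *)
From Stdlib Require Import Reals List.
Open Scope R_scope.

Definition pt : Type := (R * R)%type.
Definition pset : Type := pt -> Prop.

Definition dist (p q : pt) : R :=
  sqrt ((fst p - fst q) ^ 2 + (snd p - snd q) ^ 2).

Definition ball (x : pt) (e : R) : pset := fun q => dist x q < e.

Definition closure (A : pset) : pset :=
  fun p => forall e, 0 < e -> exists q, A q /\ dist p q < e.

Definition divergent (n : nat -> nat) : Prop :=
  forall N, exists K, forall k, (K <= k)%nat -> (N <= n k)%nat.

Definition seq_lim (u : nat -> pt) (y : pt) : Prop :=
  forall e, 0 < e -> exists K, forall k, (K <= k)%nat -> dist (u k) y < e.

Section General.
Variables (X X1 X2 : pset) (f : pt -> pt).

Definition Delta : pset := fun p => X p /\ ~ X1 p /\ ~ X2 p.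

Definition Xtilde : pset :=
  fun p => forall n : nat, X (Nat.iter n f p) /\ ~ Delta (Nat.iter n f p).

Definition omega (x : pt) : pset :=
  fun y => exists n : nat -> nat, divergent n /\ seq_lim (fun k => Nat.iter (n k) f x) y.

Definition Lset : pset := closure (fun y => exists x, Xtilde x /\ omega x y).

Definition nonwandering (x : pt) : Prop :=
  X x /\
  forall e, 0 < e ->
    exists n : nat -> nat, divergent n /\
      forall k, exists z, ball x e z /\ Xtilde z /\ ball x e (Nat.iter (n k) f z).

Definition Omega : pset := nonwandering.

(* index i : bool, false <-> 1, true <-> 2 *)
Definition Xi (i : bool) : pset := if i then X2 else X1.

Definition Fop (i : bool) (A : pset) : pset :=
  closure (fun q => exists p, A p /\ Xi i p /\ q = f p).

(* atom for the word [i_1; ...; i_n] : F_{i_n} o ... o F_{i_1} (X) *)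
Definition atom (w : list bool) : pset :=
  fold_left (fun A i => Fop i A) w X.

Definition Lambda_n (n : nat) : pset :=
  fun p => exists w : list bool, length w = n /\ atom w p.

Definition Lambda : pset := fun p => forall n : nat, (1 <= n)%nat -> Lambda_n n p.

End General.

Definition Xsq : pset := fun p => 0 <= fst p <= 1 /\ 0 <= snd p <= 1.
Definition X1ex : pset := fun p => Xsq p /\ snd p < (fst p) ^ 2.
Definition X2ex : pset := fun p => Xsq p /\ snd p > (fst p) ^ 2.
Definition f1ex (lam : R) (p : pt) : pt := (lam * fst p, lam * snd p).
Definition f2ex (lam : R) (p : pt) : pt := (lam * fst p, lam * snd p + (1 - lam)).

(* Main.v *)
From Stdlib Require Import Reals List Lra Lia Classical.
Require Import Defs.
Open Scope R_scope.

Lemma dist_fst p q : Rabs (fst p - fst q) <= dist p q.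
Proof.
  unfold dist. rewrite <- (sqrt_pow2 (Rabs (fst p - fst q))) by apply Rabs_pos.
  apply sqrt_le_1_alt. rewrite pow2_abs. pose proof (pow2_ge_0 (snd p - snd q)). lra.
Qed.

Lemma dist_snd p q : Rabs (snd p - snd q) <= dist p q.
Proof.
  unfold dist. rewrite <- (sqrt_pow2 (Rabs (snd p - snd q))) by apply Rabs_pos.
  apply sqrt_le_1_alt. rewrite pow2_abs. pose proof (pow2_ge_0 (fst p - fst q)). lra.
Qed.

Lemma dist_le p q : dist p q <= Rabs (fst p - fst q) + Rabs (snd p - snd q).
Proof.
  unfold dist. rewrite <- (sqrt_pow2 (Rabs (fst p - fst q) + Rabs (snd p - snd q))).
  2:{ pose proof (Rabs_pos (fst p - fst q)); pose proof (Rabs_pos (snd p - snd q)); lra. }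
  apply sqrt_le_1_alt.
  rewrite <- (pow2_abs (fst p - fst q)), <- (pow2_abs (snd p - snd q)).
  pose proof (Rabs_pos (fst p - fst q)); pose proof (Rabs_pos (snd p - snd q)). nra.
Qed.

Lemma dist_refl p : dist p p = 0.
Proof. unfold dist. replace ((fst p - fst p) ^ 2 + (snd p - snd p) ^ 2) with 0 by ring. apply sqrt_0. Qed.

Lemma pow_le1 lam n : 0 <= lam <= 1 -> lam ^ n <= 1.
Proof. intros H; induction n; simpl; [lra|]. pose proof (pow_le lam n ltac:(lra)). nra. Qed.

Lemma pow_small lam (hlam : 0 < lam < 1) y : 0 < y -> exists N, forall n, (N <= n)%nat -> lam ^ n < y.
Proof.
  intros Hy. destruct (pow_lt_1_zero lam ltac:(rewrite Rabs_pos_eq; lra) y Hy) as [N HN].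
  exists N; intros n Hn. specialize (HN n Hn). rewrite Rabs_pos_eq in HN; [lra|].
  apply pow_le; lra.
Qed.

Lemma iter_S (f : pt -> pt) n p : Nat.iter (S n) f p = f (Nat.iter n f p).
Proof. reflexivity. Qed.

Lemma X2_step lam (hlam : 0 < lam < 1) p : X2ex p -> X2ex (f2ex lam p).
Proof.
  destruct p as [x y]; unfold X2ex, Xsq, f2ex; simpl. intros [[[? ?] [? ?]] ?]. nra.
Qed.

Lemma X2_orbit lam (hlam : 0 < lam < 1) f (hf2 : forall p, X2ex p -> f p = f2ex lam p) a b :
  X2ex (a, b) -> forall n, X2ex (Nat.iter n f (a,b)) /\
     Nat.iter n f (a, b) = (lam ^ n * a, 1 - lam ^ n * (1 - b)).
Proof.
  intros H n; induction n as [|n [IH1 IH2]].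
  - simpl. split; [exact H|]. f_equal; ring.
  - rewrite iter_S, hf2 by exact IH1. split; [apply X2_step; auto|].
    rewrite IH2. unfold f2ex; simpl. f_equal; ring.
Qed.

Lemma X1_axis lam (hlam : 0 < lam < 1) f (hf1 : forall p, X1ex p -> f p = f1ex lam p) a :
  0 < a <= 1 -> forall n, X1ex (Nat.iter n f (a,0)) /\ Nat.iter n f (a, 0) = (lam ^ n * a, 0).
Proof.
  intros Ha n; induction n as [|n [IH1 IH2]].
  - simpl. split; [|f_equal; ring]. unfold X1ex, Xsq; simpl. split; [split; split|]; try lra. nra.
  - rewrite iter_S, hf1 by exact IH1. rewrite IH2. unfold f1ex; simpl.
    pose proof (pow_lt lam n ltac:(lra)). pose proof (pow_le1 lam n ltac:(lra)).
    assert (0 < lam * (lam ^ n * a)) by (apply Rmult_lt_0_compat; [lra|]; apply Rmult_lt_0_compat; lra).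
    assert (lam ^ n * a <= 1) by nra. assert (lam * (lam ^ n * a) <= 1) by nra.
    split; [|f_equal; ring]. unfold X1ex, Xsq; simpl. split; [split; split|]; try lra.
    nra.
Qed.

Lemma X1X2_Xtilde f (z : pt) : (forall n, X1ex (Nat.iter n f z) \/ X2ex (Nat.iter n f z)) ->
  Xtilde Xsq X1ex X2ex f z.
Proof.
  intros H n. split.
  - destruct (H n) as [[? ?]|[? ?]]; auto.
  - unfold Delta. destruct (H n); tauto.
Qed.

Lemma Xtilde_cases f z : Xtilde Xsq X1ex X2ex f z -> forall n,
  X1ex (Nat.iter n f z) \/ X2ex (Nat.iter n f z).
Proof.
  intros H n. destruct (H n) as [HX HD]. unfold Delta in HD.
  destruct (classic (X1ex (Nat.iter n f z))); [left; auto|].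
  destruct (classic (X2ex (Nat.iter n f z))); [right; auto|]. tauto.
Qed.

Lemma Xtilde_fst lam f (hf1 : forall p, X1ex p -> f p = f1ex lam p)
  (hf2 : forall p, X2ex p -> f p = f2ex lam p) z :
  Xtilde Xsq X1ex X2ex f z -> forall n, fst (Nat.iter n f z) = lam ^ n * fst z.
Proof.
  intros H n; induction n.
  - simpl; ring.
  - rewrite iter_S. destruct (Xtilde_cases f z H n) as [Hc|Hc].
    + rewrite hf1 by exact Hc. unfold f1ex; simpl. rewrite IHn; ring.
    + rewrite hf2 by exact Hc. unfold f2ex; simpl. rewrite IHn; ring.
Qed.
Lemma small_zero x : (forall e, 0 < e -> Rabs x < e) -> x = 0.
Proof.
  intros H. destruct (Req_dec x 0) as [|Hx]; auto.
  specialize (H (Rabs x) (Rabs_pos_lt x Hx)). lra.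
Qed.

Lemma pair_eq (y : pt) a b : fst y = a -> snd y = b -> y = (a, b).
Proof. destruct y; simpl; intros; subst; auto. Qed.

Lemma lim_div (v : nat -> pt) nk y a b : divergent nk ->
  seq_lim (fun k => v (nk k)) y ->
  (forall e, 0 < e -> exists N, forall n, (N <= n)%nat ->
      Rabs (fst (v n) - a) < e /\ Rabs (snd (v n) - b) < e) -> y = (a, b).
Proof.
  intros Hd Hl Ht.
  assert (H : forall e, 0 < e -> Rabs (fst y - a) < e /\ Rabs (snd y - b) < e).
  { intros e He. destruct (Hl (e/2) ltac:(lra)) as [K HK].
    destruct (Ht (e/2) ltac:(lra)) as [N HN]. destruct (Hd N) as [K' HK'].
    specialize (HK (max K K') ltac:(lia)). specialize (HN (nk (max K K')) (HK' (max K K') ltac:(lia))).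
    pose proof (dist_fst (v (nk (max K K'))) y). pose proof (dist_snd (v (nk (max K K'))) y).
    destruct HN as [H1 H2].
    split.
    - replace (fst y - a) with (-(fst (v (nk (max K K'))) - fst y) + (fst (v (nk (max K K'))) - a)) by ring.
      pose proof (Rabs_triang (-(fst (v (nk (max K K'))) - fst y)) (fst (v (nk (max K K'))) - a)).
      rewrite Rabs_Ropp in H3. lra.
    - replace (snd y - b) with (-(snd (v (nk (max K K'))) - snd y) + (snd (v (nk (max K K'))) - b)) by ring.
      pose proof (Rabs_triang (-(snd (v (nk (max K K'))) - snd y)) (snd (v (nk (max K K'))) - b)).
      rewrite Rabs_Ropp in H3. lra. }
  apply pair_eq.
  - assert (fst y - a = 0) by (apply small_zero; intros; apply H; auto). lra.
  - assert (snd y - b = 0) by (apply small_zero; intros; apply H; auto). lra.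
Qed.

Lemma omega_char lam (hlam : 0 < lam < 1) f (hf1 : forall p, X1ex p -> f p = f1ex lam p)
  (hf2 : forall p, X2ex p -> f p = f2ex lam p) z y :
  Xtilde Xsq X1ex X2ex f z -> omega f z y -> y = (0, 0) \/ y = (0, 1).
Proof.
  intros Hz [nk [Hd Hl]].
  destruct (classic (exists N, X2ex (Nat.iter N f z))) as [[N HN]|HN].
  - right. apply (lim_div (fun n => Nat.iter n f z) nk); auto.
    intros e He. destruct (pow_small lam hlam e He) as [M HM].
    exists (N + M)%nat. intros n Hn.
    specialize (HM (n - N)%nat ltac:(lia)). pose proof (pow_lt lam (n - N) ltac:(lra)).
    replace n with ((n - N) + N)%nat by lia. rewrite Nat.iter_add.
    set (j := (n - N)%nat) in *. set (t := lam ^ j) in *.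
    destruct (Nat.iter N f z) as [a b] eqn:Ez.
    destruct (X2_orbit lam hlam f hf2 a b HN j) as [_ Heq]. rewrite Heq; simpl. fold t.
    destruct HN as [[[? ?] [? ?]] ?]; simpl in *.
    split.
    + rewrite Rabs_pos_eq; nra.
    + rewrite Rabs_left1; nra.
  - left. destruct z as [a b].
    assert (Hit : forall n, Nat.iter n f (a, b) = (lam ^ n * a, lam ^ n * b)).
    { induction n; [simpl; f_equal; ring|].
      rewrite iter_S. destruct (Xtilde_cases f _ Hz n) as [Hc|Hc].
      - rewrite hf1 by exact Hc. rewrite IHn. unfold f1ex; simpl. f_equal; ring.
      - exfalso; apply HN; eauto. }
    apply (lim_div (fun n => Nat.iter n f (a, b)) nk); auto.
    intros e He. destruct (pow_small lam hlam e He) as [M HM].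
    exists M. intros n Hn. rewrite Hit; simpl. specialize (HM n Hn).
    pose proof (pow_lt lam n ltac:(lra)).
    destruct (Hz 0%nat) as [[[? ?] [? ?]] _]; simpl in *.
    split; rewrite Rabs_pos_eq; nra.
Qed.
Lemma X2_01 : X2ex (0, 1).
Proof. unfold X2ex, Xsq; simpl; lra. Qed.

Lemma iter_01 lam (hlam : 0 < lam < 1) f (hf2 : forall p, X2ex p -> f p = f2ex lam p) n :
  X2ex (Nat.iter n f (0,1)) /\ Nat.iter n f (0, 1) = (0, 1).
Proof.
  destruct (X2_orbit lam hlam f hf2 0 1 X2_01 n) as [H1 H2]. split; auto.
  rewrite H2. f_equal; ring.
Qed.

Lemma Xtilde_01 lam (hlam : 0 < lam < 1) f (hf2 : forall p, X2ex p -> f p = f2ex lam p) :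
  Xtilde Xsq X1ex X2ex f (0, 1).
Proof. apply X1X2_Xtilde. intros n. right. apply (iter_01 lam hlam f hf2 n). Qed.

Lemma Xtilde_axis lam (hlam : 0 < lam < 1) f (hf1 : forall p, X1ex p -> f p = f1ex lam p) a :
  0 < a <= 1 -> Xtilde Xsq X1ex X2ex f (a, 0).
Proof. intros Ha. apply X1X2_Xtilde. intros n. left. apply (X1_axis lam hlam f hf1 a Ha n). Qed.

Lemma div_id : divergent (fun k => k).
Proof. intros N; exists N; auto. Qed.

Lemma closure_two (A : pset) p : (forall q, A q -> q = (0,0) \/ q = (0,1)) -> closure A p ->
  p = (0,0) \/ p = (0,1).
Proof.
  intros HA Hc.
  assert (Hx : fst p = 0).
  { assert (fst p - 0 = 0); [|lra]. apply small_zero. intros e He.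
    destruct (Hc e He) as [q [Hq Hd]]. pose proof (dist_fst p q).
    destruct (HA q Hq); subst q; simpl in *; lra. }
  destruct (Req_dec (snd p) 0) as [H0|H0].
  - left. apply pair_eq; auto.
  - destruct (Req_dec (snd p) 1) as [H1|H1].
    + right. apply pair_eq; auto.
    + exfalso. pose proof (Rabs_pos_lt _ H0) as Ha. assert (Hb : snd p - 1 <> 0) by lra.
      pose proof (Rabs_pos_lt _ Hb).
      destruct (Hc (Rmin (Rabs (snd p)) (Rabs (snd p - 1))) ltac:(apply Rmin_pos; auto)) as [q [Hq Hd]].
      pose proof (dist_snd p q). pose proof (Rmin_l (Rabs (snd p)) (Rabs (snd p - 1))).
      pose proof (Rmin_r (Rabs (snd p)) (Rabs (snd p - 1))).
      destruct (HA q Hq); subst q; simpl in *.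
      * replace (snd p - 0) with (snd p) in * by ring. lra.
      * lra.
Qed.

Lemma L_char lam (hlam : 0 < lam < 1) f (hf1 : forall p, X1ex p -> f p = f1ex lam p)
  (hf2 : forall p, X2ex p -> f p = f2ex lam p) p :
  Lset Xsq X1ex X2ex f p <-> (p = (0, 0) \/ p = (0, 1)).
Proof.
  split.
  - apply closure_two. intros q [z [Hz Ho]]. exact (omega_char lam hlam f hf1 hf2 z q Hz Ho).
  - intros Hp e He. exists p. split; [|rewrite dist_refl; lra].
    destruct Hp as [->| ->].
    + exists (1, 0). split; [apply (Xtilde_axis lam hlam f hf1); lra|].
      exists (fun k => k). split; [apply div_id|].
      intros e' He'. destruct (pow_small lam hlam e' He') as [M HM]. exists M. intros k Hk.
      destruct (X1_axis lam hlam f hf1 1 ltac:(lra) k) as [_ ->].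
      eapply Rle_lt_trans; [apply dist_le|]. simpl. pose proof (pow_lt lam k ltac:(lra)).
      specialize (HM k Hk).
      rewrite Rabs_pos_eq by nra. replace (0 - 0) with 0 by ring. rewrite Rabs_R0. nra.
    + exists (0, 1). split; [apply (Xtilde_01 lam hlam f hf2)|].
      exists (fun k => k). split; [apply div_id|].
      intros e' He'. exists 0%nat. intros k Hk.
      destruct (iter_01 lam hlam f hf2 k) as [_ ->]. rewrite dist_refl; lra.
Qed.

Lemma Omega_char lam (hlam : 0 < lam < 1) f (hf1 : forall p, X1ex p -> f p = f1ex lam p)
  (hf2 : forall p, X2ex p -> f p = f2ex lam p) p :
  Omega Xsq X1ex X2ex f p <-> (p = (0, 0) \/ p = (0, 1)).
Proof.
  split.
  - intros [HX H]. destruct p as [px py]. destruct HX as [[Hx0 Hx1] [Hy0 Hy1]]; simpl in *.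
    assert (Hpx : px = 0).
    { destruct (Req_dec px 0) as [|Hne]; auto. exfalso.
      destruct (H (px/2) ltac:(lra)) as [nk [Hd Hk]].
      destruct (pow_small lam hlam (px/2) ltac:(lra)) as [N HN].
      destruct (Hd N) as [K HK]. destruct (Hk K) as [z [_ [Hz Hb]]].
      unfold ball in Hb. pose proof (dist_fst (px,py) (Nat.iter (nk K) f z)).
      rewrite (Xtilde_fst lam f hf1 hf2 z Hz) in H0. simpl in H0.
      specialize (HN (nk K) (HK K ltac:(lia))). pose proof (pow_lt lam (nk K) ltac:(lra)).
      destruct (Hz 0%nat) as [[[? ?] _] _]; simpl in *.
      rewrite Rabs_pos_eq in H0 by nra. nra. }
    subst px.
    destruct (Req_dec py 0) as [->|H0]; [left; auto|].
    destruct (Req_dec py 1) as [->|H1]; [right; auto|]. exfalso.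
    set (e := Rmin py (1 - py) / 2).
    assert (He1 : e <= py / 2) by (unfold e; pose proof (Rmin_l py (1-py)); lra).
    assert (He2 : e <= (1 - py) / 2) by (unfold e; pose proof (Rmin_r py (1-py)); lra).
    assert (He0 : 0 < e) by (unfold e; pose proof (Rmin_pos py (1-py) ltac:(lra) ltac:(lra)); lra).
    destruct (H e He0) as [nk [Hd Hk]].
    destruct (pow_small lam hlam ((1 - py)/2) ltac:(lra)) as [N HN].
    destruct (Hd N) as [K HK]. destruct (Hk K) as [z [Hbz [Hz Hb]]].
    destruct z as [a b]. unfold ball in Hbz, Hb.
    pose proof (dist_fst (0,py) (a,b)) as Hdx. pose proof (dist_snd (0,py) (a,b)) as Hdy. simpl in Hdx, Hdy.
    destruct (Hz 0%nat) as [[[Ha0 Ha1] [Hb0 Hb1]] _]; simpl in Ha0, Ha1, Hb0, Hb1.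
    assert (Hae : a < e).
    { replace (0 - a) with (- a) in Hdx by ring. rewrite Rabs_Ropp, Rabs_pos_eq in Hdx by lra. lra. }
    assert (Hbe : Rabs (py - b) < e) by lra. apply Rabs_def2 in Hbe.
    assert (HX2 : X2ex (a, b)).
    { split; [split; simpl; lra|]. simpl. nra. }
    destruct (X2_orbit lam hlam f hf2 a b HX2 (nk K)) as [_ Heq]. rewrite Heq in Hb.
    pose proof (dist_snd (0, py) (lam ^ nk K * a, 1 - lam ^ nk K * (1 - b))) as Hd2. simpl in Hd2.
    specialize (HN (nk K) (HK K ltac:(lia))). pose proof (pow_lt lam (nk K) ltac:(lra)) as Hpl.
    assert (Hr : Rabs (py - (1 - lam ^ nk K * (1 - b))) < e) by lra.
    apply Rabs_def2 in Hr. nra.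
  - intros Hp. destruct Hp as [->| ->].
    + split; [unfold Xsq; simpl; lra|]. intros e He.
      exists (fun k => k). split; [apply div_id|]. intros k.
      set (d := Rmin (e/2) 1).
      assert (0 < d) by (apply Rmin_pos; lra).
      assert (d <= e/2) by apply Rmin_l. assert (d <= 1) by apply Rmin_r.
      exists (d, 0). split; [|split].
      * unfold ball. eapply Rle_lt_trans; [apply dist_le|]. simpl.
        replace (0 - d) with (- d) by ring. replace (0 - 0) with 0 by ring.
        rewrite Rabs_Ropp, Rabs_R0, Rabs_pos_eq; lra.
      * apply (Xtilde_axis lam hlam f hf1); lra.
      * destruct (X1_axis lam hlam f hf1 d ltac:(lra) k) as [_ ->]. unfold ball.
        eapply Rle_lt_trans; [apply dist_le|]. simpl.
        pose proof (pow_lt lam k ltac:(lra)). pose proof (pow_le1 lam k ltac:(lra)).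
        replace (0 - lam ^ k * d) with (- (lam ^ k * d)) by ring. replace (0 - 0) with 0 by ring.
        rewrite Rabs_Ropp, Rabs_R0, Rabs_pos_eq; nra.
    + split; [unfold Xsq; simpl; lra|]. intros e He.
      exists (fun k => k). split; [apply div_id|]. intros k.
      exists (0, 1). unfold ball. split; [rewrite dist_refl; lra|split].
      * apply (Xtilde_01 lam hlam f hf2).
      * destruct (iter_01 lam hlam f hf2 k) as [_ ->]. rewrite dist_refl; lra.
Qed.
Definition qf (a b c d : R) (q : pt) := a * snd q + b * fst q ^ 2 + c * fst q + d.

Lemma closure_qf (B : pset) a b c d p :
  (forall q, B q -> 0 <= fst q <= 1 /\ 0 <= qf a b c d q) -> closure B p -> 0 <= qf a b c d p.
Proof.
  intros HB Hc. destruct (Rle_or_lt 0 (qf a b c d p)) as [|Hneg]; auto. exfalso.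
  set (D := - qf a b c d p).
  set (K := Rabs a + 3 * Rabs b + Rabs c + 1).
  assert (HK : 1 <= K) by (unfold K; pose proof (Rabs_pos a); pose proof (Rabs_pos b); pose proof (Rabs_pos c); lra).
  set (e := Rmin 1 (D / K)).
  assert (He : 0 < e) by (apply Rmin_pos; [lra|]; unfold D; apply Rdiv_lt_0_compat; lra).
  assert (He1 : e <= 1) by apply Rmin_l.
  assert (HeK : e * K <= D).
  { assert (e <= D / K) by apply Rmin_r. apply (Rmult_le_compat_r K) in H; [|lra].
    unfold Rdiv in H. rewrite Rmult_assoc, Rinv_l in H by lra. lra. }
  destruct (Hc e He) as [q [Hq Hd]].
  destruct (HB q Hq) as [[Hq0 Hq1] Hqf].
  pose proof (dist_fst p q) as Hu. pose proof (dist_snd p q) as Hw.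
  set (u := fst q - fst p). set (w := snd q - snd p).
  assert (Hu' : Rabs u < e) by (unfold u; rewrite <- Rabs_Ropp; replace (- (fst q - fst p)) with (fst p - fst q) by ring; lra).
  assert (Hw' : Rabs w < e) by (unfold w; rewrite <- Rabs_Ropp; replace (- (snd q - snd p)) with (snd p - snd q) by ring; lra).
  assert (Heq : qf a b c d q - qf a b c d p = a * w + b * (u * (fst q + fst p)) + c * u)
    by (unfold qf, u, w; ring).
  assert (Hs : Rabs (fst q + fst p) <= 3).
  { replace (fst q + fst p) with (2 * fst q - u) by (unfold u; ring).
    pose proof (Rabs_triang (2 * fst q) (- u)). rewrite Rabs_Ropp in H.
    rewrite Rabs_pos_eq with (x := 2 * fst q) in H by lra. unfold Rminus. lra. }
  assert (Hbound : Rabs (qf a b c d q - qf a b c d p) < D).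
  { rewrite Heq.
    pose proof (Rabs_triang (a * w + b * (u * (fst q + fst p))) (c * u)).
    pose proof (Rabs_triang (a * w) (b * (u * (fst q + fst p)))).
    rewrite !Rabs_mult in *.
    pose proof (Rabs_pos a); pose proof (Rabs_pos b); pose proof (Rabs_pos c).
    pose proof (Rabs_pos u); pose proof (Rabs_pos w); pose proof (Rabs_pos (fst q + fst p)).
    assert (Rabs a * Rabs w <= Rabs a * e) by (apply Rmult_le_compat_l; lra).
    assert (Rabs c * Rabs u <= Rabs c * e) by (apply Rmult_le_compat_l; lra).
    assert (Rabs u * Rabs (fst q + fst p) <= e * 3) by (apply Rmult_le_compat; lra).
    assert (Rabs b * (Rabs u * Rabs (fst q + fst p)) <= Rabs b * (e * 3)) by (apply Rmult_le_compat_l; lra).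
    assert (e * K = Rabs a * e + 3 * Rabs b * e + Rabs c * e + e) by (unfold K; ring).
    lra. }
  apply Rabs_def2 in Hbound. unfold D in *. lra.
Qed.

Lemma atom_snoc f w i : atom Xsq X1ex X2ex f (w ++ i :: nil) = Fop X1ex X2ex f i (atom Xsq X1ex X2ex f w).
Proof. unfold atom. rewrite fold_left_app. reflexivity. Qed.

Lemma repeat_snoc {A} (x : A) n : repeat x (S n) = repeat x n ++ x :: nil.
Proof. induction n; simpl; [reflexivity|]. simpl in IHn. rewrite IHn. reflexivity. Qed.

Lemma Fop_mem f i (A : pset) p : A p -> Xi X1ex X2ex i p -> Fop X1ex X2ex f i A (f p).
Proof. intros HA Hi e He. exists (f p). split; [exists p; auto|]. rewrite dist_refl; lra. Qed.
Lemma Fop_ineq f i (A : pset) a b c d q :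
  (forall p, A p -> Xi X1ex X2ex i p -> 0 <= fst (f p) <= 1 /\ 0 <= qf a b c d (f p)) ->
  Fop X1ex X2ex f i A q -> 0 <= qf a b c d q.
Proof.
  intros H Hq. apply (closure_qf (fun q0 => exists p, A p /\ Xi X1ex X2ex i p /\ q0 = f p) a b c d q); auto.
  intros q' [p [Hp [Hx ->]]]. auto.
Qed.

Lemma Fop_empty f i (A : pset) q :
  (forall p, A p -> Xi X1ex X2ex i p -> False) -> ~ Fop X1ex X2ex f i A q.
Proof.
  intros H Hq. destruct (Hq 1 ltac:(lra)) as [q' [[p [Hp [Hx _]]] _]]. eauto.
Qed.

Ltac cl Hpre Hq q a b c d :=
  let H := fresh "Hc" in
  assert (H : 0 <= qf a b c d q) by (refine (Fop_ineq _ _ _ _ _ _ _ q _ Hq); ( let p := fresh "p" in let Hp := fresh "Hp" in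
     let Hx := fresh "Hx" in let T := fresh "T" in
     intros p Hp Hx; pose proof (Hpre p Hp Hx) as T; unfold Xsq in T; unfold qf;
     decompose [and] T; split; [split; lra|]; nra)); unfold qf in H.

Definition Inv lam f (w : list bool) : Prop :=
  w = nil \/
  (forall q, ~ atom Xsq X1ex X2ex f w q) \/
  ((1 <= length w)%nat /\ forall q, atom Xsq X1ex X2ex f w q ->
     Xsq q /\ fst q <= lam ^ length w /\ lam * snd q <= fst q ^ 2) \/
  (exists m, forall q, atom Xsq X1ex X2ex f w q ->
     Xsq q /\ fst q <= lam ^ length w /\ 1 - lam ^ m <= snd q /\
     snd q <= 1 - lam ^ m + lam ^ length w /\ fst q ^ 2 <= snd q).

Lemma Inv_all lam (hlam : 0 < lam < 1) f (hf1 : forall p, X1ex p -> f p = f1ex lam p)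
  (hf2 : forall p, X2ex p -> f p = f2ex lam p) w : Inv lam f w.
Proof.
  induction w as [|i w IH] using rev_ind; [left; reflexivity|].
  unfold Inv. rewrite atom_snoc. right.
  assert (Hlen : length (w ++ i :: nil) = S (length w)) by (rewrite length_app; simpl; lia).
  rewrite Hlen. set (n := length w) in *. set (A := atom Xsq X1ex X2ex f w) in *.
  pose proof (pow_lt lam n ltac:(lra)) as Hpn. pose proof (pow_le1 lam n ltac:(lra)) as Hpn1.
  destruct IH as [Hnil|[Hemp|[[Hn HA]|[m HB]]]].
  all: try (change (length w) with n in HA); try (change (length w) with n in HB); try (change (length w) with n in Hn).
  -
    subst w. unfold A; simpl atom. simpl in n. subst n. simpl. destruct i.
    + right; right. exists 1%nat. intros q Hq.
      assert (Hpre : forall p, Xsq p -> Xi X1ex X2ex true p ->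
        Xsq (f p) /\ fst (f p) <= lam /\ 1 - lam <= snd (f p) /\ snd (f p) <= 1 /\ fst (f p) ^ 2 <= snd (f p)).
      { intros p Hp Hx. simpl in Hx. rewrite hf2 by exact Hx. destruct Hx as [_ Hx].
        destruct p as [x y]; unfold Xsq, f2ex in *; simpl in *. repeat split; nra. }
      cl Hpre Hq q 0 0 1 0. cl Hpre Hq q 0 0 (-1) 1. cl Hpre Hq q 1 0 0 0. cl Hpre Hq q (-1) 0 0 1.
      cl Hpre Hq q 0 0 (-1) lam. cl Hpre Hq q 1 0 0 (-(1-lam)). cl Hpre Hq q 1 (-1) 0 0.
      unfold Xsq. simpl. repeat split; lra.
    + right; left. split; [lia|]. intros q Hq.
      assert (Hpre : forall p, Xsq p -> Xi X1ex X2ex false p ->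
        Xsq (f p) /\ fst (f p) <= lam /\ lam * snd (f p) <= fst (f p) ^ 2).
      { intros p Hp Hx. simpl in Hx. rewrite hf1 by exact Hx. destruct Hx as [_ Hx].
        destruct p as [x y]; unfold Xsq, f1ex in *; simpl in *. repeat split; nra. }
      cl Hpre Hq q 0 0 1 0. cl Hpre Hq q 0 0 (-1) 1. cl Hpre Hq q 1 0 0 0. cl Hpre Hq q (-1) 0 0 1.
      cl Hpre Hq q 0 0 (-1) lam. cl Hpre Hq q (-lam) 1 0 0.
      unfold Xsq. simpl. repeat split; lra.
  - left. intros q. apply Fop_empty. intros p Hp _. exact (Hemp p Hp).
  - destruct i.
    + right; right. exists 1%nat. intros q Hq.
      assert (Hln : lam ^ n <= lam).
      { replace n with (S (n - 1)) by lia. simpl. pose proof (pow_le1 lam (n - 1) ltac:(lra)). nra. }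
      assert (Hpre : forall p, A p -> Xi X1ex X2ex true p ->
        Xsq (f p) /\ fst (f p) <= lam * lam ^ n /\ 1 - lam <= snd (f p) /\
        snd (f p) <= 1 - lam + lam * lam ^ n /\ fst (f p) ^ 2 <= snd (f p)).
      { intros p Hp Hx. destruct (HA p Hp) as [HX [H1 H2]]. simpl in Hx. rewrite hf2 by exact Hx.
        destruct Hx as [_ Hx].
        destruct p as [x y]; unfold Xsq, f2ex in *; simpl in *.
        assert (x * x <= lam ^ n * lam ^ n) by (apply Rmult_le_compat; lra).
        repeat split; nra. }
      cl Hpre Hq q 0 0 1 0. cl Hpre Hq q 0 0 (-1) 1. cl Hpre Hq q 1 0 0 0. cl Hpre Hq q (-1) 0 0 1.
      cl Hpre Hq q 0 0 (-1) (lam * lam ^ n). cl Hpre Hq q 1 0 0 (-(1-lam)).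
      cl Hpre Hq q (-1) 0 0 (1 - lam + lam * lam ^ n). cl Hpre Hq q 1 (-1) 0 0.
      unfold Xsq. simpl. repeat split; lra.
    + right; left. split; [lia|]. intros q Hq.
      assert (Hpre : forall p, A p -> Xi X1ex X2ex false p ->
        Xsq (f p) /\ fst (f p) <= lam * lam ^ n /\ lam * snd (f p) <= fst (f p) ^ 2).
      { intros p Hp Hx. destruct (HA p Hp) as [HX [H1 H2]]. simpl in Hx. rewrite hf1 by exact Hx.
        destruct Hx as [_ Hx].
        destruct p as [x y]; unfold Xsq, f1ex in *; simpl in *. repeat split; nra. }
      cl Hpre Hq q 0 0 1 0. cl Hpre Hq q 0 0 (-1) 1. cl Hpre Hq q 1 0 0 0. cl Hpre Hq q (-1) 0 0 1.
      cl Hpre Hq q 0 0 (-1) (lam * lam ^ n). cl Hpre Hq q (-lam) 1 0 0.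
      unfold Xsq. simpl. repeat split; lra.
  - destruct i.
    + right; right. exists (S m). intros q Hq.
      pose proof (pow_le1 lam m ltac:(lra)).
      assert (Hpre : forall p, A p -> Xi X1ex X2ex true p ->
        Xsq (f p) /\ fst (f p) <= lam * lam ^ n /\ 1 - lam * lam ^ m <= snd (f p) /\
        snd (f p) <= 1 - lam * lam ^ m + lam * lam ^ n /\ fst (f p) ^ 2 <= snd (f p)).
      { intros p Hp Hx. destruct (HB p Hp) as [HX [H1 [H2 [H3 H4]]]]. simpl in Hx. rewrite hf2 by exact Hx.
        destruct Hx as [_ Hx].
        destruct p as [x y]; unfold Xsq, f2ex in *; simpl in *. repeat split; nra. }
      cl Hpre Hq q 0 0 1 0. cl Hpre Hq q 0 0 (-1) 1. cl Hpre Hq q 1 0 0 0. cl Hpre Hq q (-1) 0 0 1.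
      cl Hpre Hq q 0 0 (-1) (lam * lam ^ n). cl Hpre Hq q 1 0 0 (-(1 - lam * lam ^ m)).
      cl Hpre Hq q (-1) 0 0 (1 - lam * lam ^ m + lam * lam ^ n). cl Hpre Hq q 1 (-1) 0 0.
      unfold Xsq. simpl. repeat split; lra.
    + left. intros q. apply Fop_empty. intros p Hp Hx. simpl in Hx.
      destruct (HB p Hp) as [_ [_ [_ [_ H4]]]]. destruct Hx as [_ Hx]. lra.
Qed.
Definition Sset lam : pset := fun q => exists n : nat, q = (0, 1 - lam ^ n).

Lemma Lam_sub lam (hlam : 0 < lam < 1) f (hf1 : forall p, X1ex p -> f p = f1ex lam p)
  (hf2 : forall p, X2ex p -> f p = f2ex lam p) p :
  Lambda Xsq X1ex X2ex f p -> closure (Sset lam) p.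
Proof.
  intros HL e He. destruct (pow_small lam hlam (e/2) ltac:(lra)) as [N HN].
  destruct (HL (S N) ltac:(lia)) as [w [Hlw Hw]].
  specialize (HN (S N) ltac:(lia)). pose proof (pow_lt lam (S N) ltac:(lra)) as Hpos.
  destruct (Inv_all lam hlam f hf1 hf2 w) as [Hnil|[Hemp|[[Hn HA]|[m HB]]]].
  - subst w; simpl in Hlw; lia.
  - exfalso; exact (Hemp p Hw).
  - destruct (HA p Hw) as [[[Hx0 Hx1] [Hy0 Hy1]] [H1 H2]]. rewrite Hlw in H1.
    exists (0, 1 - lam ^ 0). split; [exists 0%nat; reflexivity|].
    eapply Rle_lt_trans; [apply dist_le|]. simpl.
    replace (fst p - 0) with (fst p) by ring. replace (snd p - (1 - 1)) with (snd p) by ring.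
    rewrite !Rabs_pos_eq by lra.
    assert (lam ^ S N <= lam) by (simpl; pose proof (pow_le1 lam N ltac:(lra)); nra).
    assert (snd p <= fst p) by nra. lra.
  - destruct (HB p Hw) as [[[Hx0 Hx1] [Hy0 Hy1]] [H1 [H2 [H3 H4]]]]. rewrite Hlw in H1, H3.
    exists (0, 1 - lam ^ m). split; [exists m; reflexivity|].
    eapply Rle_lt_trans; [apply dist_le|]. simpl.
    replace (fst p - 0) with (fst p) by ring.
    rewrite Rabs_pos_eq with (x := fst p) by lra.
    rewrite Rabs_pos_eq by lra. lra.
Qed.

Lemma finite_min (h : nat -> R) : (forall m, 0 < h m) -> forall N, exists d, 0 < d /\
  forall m, (m < N)%nat -> d <= h m.
Proof.
  intros Hh N; induction N as [|N [d [Hd HN]]].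
  - exists 1; split; [lra|]; intros; lia.
  - exists (Rmin d (h N)). split; [apply Rmin_pos; auto|].
    intros m Hm. destruct (Nat.eq_dec m N) as [->|Hne]; [apply Rmin_r|].
    eapply Rle_trans; [apply Rmin_l|]. apply HN; lia.
Qed.

Lemma closS_char lam (hlam : 0 < lam < 1) p :
  closure (Sset lam) p -> p = (0, 1) \/ exists m, p = (0, 1 - lam ^ m).
Proof.
  intros Hc.
  assert (Hx : fst p = 0).
  { assert (fst p - 0 = 0); [|lra]. apply small_zero. intros e He.
    destruct (Hc e He) as [q [[n ->] Hd]]. pose proof (dist_fst p (0, 1 - lam ^ n)). simpl in *; lra. }
  destruct p as [x t]; simpl in Hx; subst x.
  destruct (Req_dec t 1) as [->|Ht1]; [left; reflexivity|]. right.
  apply NNPP. intros Hno.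
  assert (Hh : forall m, 0 < Rabs (t - (1 - lam ^ m))).
  { intros m. apply Rabs_pos_lt. intros Heq. apply Hno. exists m. f_equal. lra. }
  set (g := Rabs (1 - t)). assert (Hg : 0 < g) by (apply Rabs_pos_lt; lra).
  destruct (pow_small lam hlam (g/2) ltac:(lra)) as [N HN].
  destruct (finite_min _ Hh N) as [d [Hd HdN]].
  destruct (Hc (Rmin d (g/2)) ltac:(apply Rmin_pos; lra)) as [q [[m ->] Hdq]].
  pose proof (dist_snd (0, t) (0, 1 - lam ^ m)) as Hs. simpl in Hs.
  pose proof (Rmin_l d (g/2)). pose proof (Rmin_r d (g/2)).
  destruct (Nat.lt_ge_cases m N) as [Hm|Hm].
  - specialize (HdN m Hm). lra.
  - specialize (HN m Hm). pose proof (pow_lt lam m ltac:(lra)).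
    pose proof (Rabs_triang (t - (1 - lam ^ m)) (- lam ^ m)).
    replace (t - (1 - lam ^ m) + - lam ^ m) with (- (1 - t)) in H2 by ring.
    rewrite Rabs_Ropp in H2. rewrite Rabs_Ropp, Rabs_pos_eq with (x := lam ^ m) in H2 by lra.
    fold g in H2. lra.
Qed.

Lemma J1 lam (hlam : 0 < lam < 1) f (hf1 : forall p, X1ex p -> f p = f1ex lam p) k :
  forall u v, 0 < u <= lam ^ S k -> 0 <= v -> v * lam < u ^ 2 ->
  atom Xsq X1ex X2ex f (repeat false k) (u, v).
Proof.
  induction k as [|k IH]; intros u v Hu Hv Hvu.
  - simpl. unfold Xsq; simpl. simpl in Hu. split; split; nra.
  - rewrite repeat_snoc, atom_snoc.
    assert (Eu : u = lam * (u / lam)) by (field; lra). set (u' := u / lam) in Eu. clearbody u'. subst u.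
    assert (Ev : v = lam * (v / lam)) by (field; lra). set (v' := v / lam) in Ev. clearbody v'. subst v.
    assert (Hu' : 0 < u' <= lam ^ S k).
    { change (lam ^ S (S k)) with (lam * lam ^ S k) in Hu. split; nra. }
    assert (Hv' : 0 <= v') by nra.
    assert (Hvu' : v' < u' ^ 2).
    { assert (lam * lam * v' < lam * lam * u' ^ 2) by nra.
      apply Rmult_lt_reg_l in H; nra. }
    pose proof (pow_le1 lam (S k) ltac:(lra)).
    assert (HX1 : X1ex (u', v')) by (unfold X1ex, Xsq; simpl; split; [split; split|]; nra).
    replace (lam * u', lam * v') with (f (u', v')) by (rewrite hf1 by exact HX1; reflexivity).
    apply Fop_mem; [|exact HX1]. apply IH; try lra. nra.
Qed.

Lemma origin_in lam (hlam : 0 < lam < 1) f (hf1 : forall p, X1ex p -> f p = f1ex lam p) k :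
  atom Xsq X1ex X2ex f (repeat false (S k)) (0, 0).
Proof.
  rewrite repeat_snoc, atom_snoc. intros e He.
  set (u := Rmin (lam ^ S k) (e/2)).
  pose proof (pow_lt lam (S k) ltac:(lra)). pose proof (pow_le1 lam (S k) ltac:(lra)).
  assert (Hu : 0 < u) by (apply Rmin_pos; lra).
  assert (Hu1 : u <= lam ^ S k) by apply Rmin_l. assert (Hu2 : u <= e/2) by apply Rmin_r.
  assert (HX1 : X1ex (u, 0)) by (unfold X1ex, Xsq; simpl; split; [split; split|]; nra).
  exists (f (u, 0)). split.
  - exists (u, 0). split; [|split; auto]. apply (J1 lam hlam f hf1); try lra. nra.
  - rewrite hf1 by exact HX1. unfold f1ex; simpl.
    eapply Rle_lt_trans; [apply dist_le|]. simpl.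
    replace (0 - lam * u) with (- (lam * u)) by ring. replace (0 - lam * 0) with 0 by ring.
    rewrite Rabs_Ropp, Rabs_R0, Rabs_pos_eq by nra. nra.
Qed.

Lemma chain_in lam (hlam : 0 < lam < 1) f (hf1 : forall p, X1ex p -> f p = f1ex lam p)
  (hf2 : forall p, X2ex p -> f p = f2ex lam p) k u v :
  0 < u <= lam ^ S k -> v * lam = (1 + lam) / 2 * u ^ 2 -> forall m,
  atom Xsq X1ex X2ex f (repeat false k ++ repeat true m) (lam ^ m * u, 1 - lam ^ m * (1 - v)) /\
  X2ex (lam ^ m * u, 1 - lam ^ m * (1 - v)).
Proof.
  intros Hu Hv m.
  pose proof (pow_le1 lam (S k) ltac:(lra)).
  assert (Hul : u <= lam) by (simpl in Hu; pose proof (pow_le1 lam k ltac:(lra)); nra).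
  assert (Hv0 : 0 <= v) by nra.
  assert (Hu2 : 0 < u ^ 2) by nra.
  assert (Hvu : u ^ 2 < v).
  { assert (u ^ 2 * lam < v * lam) by (rewrite Hv; nra). apply Rmult_lt_reg_r in H0; lra. }
  assert (Hv1 : v <= 1).
  { assert (v * lam <= 1 * lam) by (rewrite Hv; nra). apply Rmult_le_reg_r in H0; lra. }
  induction m as [|m [IH1 IH2]].
  - simpl. rewrite app_nil_r. replace (1 * u, 1 - 1 * (1 - v)) with (u, v) by (f_equal; ring).
    split.
    + apply (J1 lam hlam f hf1); try lra. nra.
    + unfold X2ex, Xsq; simpl. split; [split; split|]; nra.
  - replace (lam ^ S m * u, 1 - lam ^ S m * (1 - v)) with (f (lam ^ m * u, 1 - lam ^ m * (1 - v))).
    2:{ rewrite hf2 by exact IH2. unfold f2ex; simpl. f_equal; ring. }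
    split.
    + rewrite repeat_snoc, app_assoc, atom_snoc. apply Fop_mem; auto.
    + rewrite hf2 by exact IH2. apply X2_step; auto.
Qed.

Lemma point_in lam (hlam : 0 < lam < 1) f (hf1 : forall p, X1ex p -> f p = f1ex lam p)
  (hf2 : forall p, X2ex p -> f p = f2ex lam p) k m :
  atom Xsq X1ex X2ex f (repeat false k ++ repeat true (S m)) (0, 1 - lam ^ S m).
Proof.
  rewrite repeat_snoc, app_assoc, atom_snoc. intros e He.
  set (u := Rmin (lam ^ S k) (e/4)).
  pose proof (pow_lt lam (S k) ltac:(lra)). pose proof (pow_le1 lam (S k) ltac:(lra)).
  assert (Hu : 0 < u) by (apply Rmin_pos; lra).
  assert (Hu1 : u <= lam ^ S k) by apply Rmin_l. assert (Hu2 : u <= e/4) by apply Rmin_r.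
  set (v := (1 + lam) / 2 * u ^ 2 / lam).
  assert (Hv : v * lam = (1 + lam) / 2 * u ^ 2) by (unfold v; field; lra).
  assert (Hul : u <= lam) by (simpl in Hu1; pose proof (pow_le1 lam k ltac:(lra)); nra).
  assert (Hv0 : 0 <= v) by nra. assert (Hvu : v <= u) by nra.
  destruct (chain_in lam hlam f hf1 hf2 k u v ltac:(lra) Hv m) as [H1 H2].
  exists (f (lam ^ m * u, 1 - lam ^ m * (1 - v))). split.
  - exists (lam ^ m * u, 1 - lam ^ m * (1 - v)). auto.
  - rewrite hf2 by exact H2. unfold f2ex; simpl.
    pose proof (pow_lt lam m ltac:(lra)). pose proof (pow_le1 lam m ltac:(lra)).
    eapply Rle_lt_trans; [apply dist_le|]. simpl.
    replace (0 - lam * (lam ^ m * u)) with (- (lam * (lam ^ m * u))) by ring.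
    replace (1 - lam * lam ^ m - (lam * (1 - lam ^ m * (1 - v)) + (1 - lam)))
      with (- (lam * lam ^ m * v)) by ring.
    assert (Hlm : 0 < lam * lam ^ m <= 1) by (split; nra).
    assert (0 <= lam * (lam ^ m * u)) by (rewrite <- Rmult_assoc; apply Rmult_le_pos; lra).
    assert (0 <= lam * lam ^ m * v) by (apply Rmult_le_pos; lra).
    rewrite !Rabs_Ropp, !Rabs_pos_eq by lra.
    assert (lam * (lam ^ m * u) <= u) by (rewrite <- Rmult_assoc; nra).
    assert (lam * lam ^ m * v <= v) by nra. lra.
Qed.

Lemma interval_in lam (hlam : 0 < lam < 1) f (hf2 : forall p, X2ex p -> f p = f2ex lam p) n :
  forall t, 1 - lam ^ n < t <= 1 -> atom Xsq X1ex X2ex f (repeat true n) (0, t).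
Proof.
  induction n as [|n IH]; intros t Ht.
  - simpl in *. unfold Xsq; simpl. lra.
  - rewrite repeat_snoc, atom_snoc.
    assert (Et : t = lam * ((t - 1 + lam) / lam) + (1 - lam)) by (field; lra).
    set (t' := (t - 1 + lam) / lam) in Et. clearbody t'. subst t.
    pose proof (pow_le1 lam n ltac:(lra)).
    simpl in Ht.
    assert (Ht' : 1 - lam ^ n < t' <= 1) by (split; nra).
    assert (HX2 : X2ex (0, t')) by (unfold X2ex, Xsq; simpl; split; [split; split|]; nra).
    replace (0, lam * t' + (1 - lam)) with (f (0, t')).
    2:{ rewrite hf2 by exact HX2. unfold f2ex; simpl. f_equal; ring. }
    apply Fop_mem; auto.
Qed.

Lemma pow_lt1 lam (hlam : 0 < lam < 1) j : (1 <= j)%nat -> lam ^ j < 1.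
Proof.
  intros Hj. replace j with (S (j - 1)) by lia. simpl.
  pose proof (pow_le1 lam (j - 1) ltac:(lra)). nra.
Qed.

Lemma Lam_sup lam (hlam : 0 < lam < 1) f (hf1 : forall p, X1ex p -> f p = f1ex lam p)
  (hf2 : forall p, X2ex p -> f p = f2ex lam p) p :
  closure (Sset lam) p -> Lambda Xsq X1ex X2ex f p.
Proof.
  intros Hc. destruct (closS_char lam hlam p Hc) as [->|[m ->]]; intros n Hn.
  - exists (repeat true n). split; [apply repeat_length|].
    apply (interval_in lam hlam f hf2). pose proof (pow_lt lam n ltac:(lra)). lra.
  - destruct (Nat.eq_dec m 0) as [->|Hm0].
    + exists (repeat false n). split; [apply repeat_length|].
      replace n with (S (n - 1)) by lia. simpl. replace (1 - 1) with 0 by ring.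
      apply (origin_in lam hlam f hf1).
    + destruct (Nat.lt_ge_cases n m) as [Hnm|Hnm].
      * exists (repeat true n). split; [apply repeat_length|].
        apply (interval_in lam hlam f hf2).
        replace m with (n + (m - n))%nat by lia. rewrite pow_add.
        pose proof (pow_lt lam n ltac:(lra)). pose proof (pow_lt1 lam hlam (m - n) ltac:(lia)).
        pose proof (pow_lt lam (m - n) ltac:(lra)). split; nra.
      * exists (repeat false (n - m) ++ repeat true m). split.
        { rewrite length_app, !repeat_length. lia. }
        pose proof (point_in lam hlam f hf1 hf2 (n - m) (m - 1)) as HP.
        replace (S (m - 1)) with m in HP by lia. exact HP.
Qed.

Theorem proposition3 (lam : R) (hlam : 0 < lam < 1) (f : pt -> pt)
  (hfX : forall p, Xsq p -> Xsq (f p))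
  (hf1 : forall p, X1ex p -> f p = f1ex lam p)
  (hf2 : forall p, X2ex p -> f p = f2ex lam p) :
  (forall p, Lset Xsq X1ex X2ex f p <-> (p = (0, 0) \/ p = (0, 1))) /\
  (forall p, Omega Xsq X1ex X2ex f p <-> (p = (0, 0) \/ p = (0, 1))) /\
  (forall p, Lambda Xsq X1ex X2ex f p <->
             closure (fun q => exists n : nat, q = (0, 1 - lam ^ n)) p).
Proof.
  split; [|split].
  - intros p. apply (L_char lam hlam f hf1 hf2).
  - intros p. apply (Omega_char lam hlam f hf1 hf2).
  - intros p. split.
    + apply (Lam_sub lam hlam f hf1 hf2).
    + apply (Lam_sup lam hlam f hf1 hf2).
Qed.
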